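(* Let $(\frac pq,\frac rs)$ be a Farey pair of order $n$ with $s>q\ge 2$, let $d=\lfloor n/q\rfloor$, $\alpha\in(0,1)$, $\beta=1-\alpha$, and $\phi_\alpha(t)=(t^q-\beta)^d-\alpha^dt^{qd-s}$. If $t_1$ and $t_2$ are roots of $\phi_\alpha$ with $|t_1|=|t_2|$, then either $t_2=t_1$ or $t_2=\overline{t_1}$.
   Context: $\mathcal{F}_n=\{p/q:0\le p<q\le n,\ \gcd(p,q)=1\}$; a Farey pair of order $n$ is a pair $(\frac pq,\frac rs)$ of elements of $\mathcal F_n$ with $\frac pq<\frac rs$ and no element of $\mathcal F_n$ strictly between them. $\phi_\alpha$ is regarded as a rational function of $t$. *)

(* Defs.v *)
From HB Require Import structures.
From mathcomp Require Import all_boot all_order all_algebra.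
From mathcomp Require Import reals.
From mathcomp Require Import complex.
Set Implicit Arguments. Unset Strict Implicit. Unset Printing Implicit Defensive.
Import Order.TTheory GRing.Theory Num.Theory.
Local Open Scope ring_scope.

Definition farey_elem (n : nat) (x : rat) : Prop :=
  exists p q : nat, [/\ (p < q)%N, (q <= n)%N, coprime p q & x = p%:R / q%:R].

Definition farey_pair (n p q r s : nat) : Prop :=
  [/\ (p < q)%N /\ (q <= n)%N /\ coprime p q,
      (r < s)%N /\ (s <= n)%N /\ coprime r s,
      (p%:R / q%:R : rat) < r%:R / s%:R &
      forall x : rat, farey_elem n x ->
        ~ ((p%:R / q%:R < x) && (x < r%:R / s%:R))].

(* phi_alpha(t) = (t^q - beta)^d - alpha^d t^(qd - s), beta = 1 - alpha,
   with an integer exponent (phi is a rational function of t). *)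
Definition phi (R : rcfType) (q s d : nat) (alpha : R) (t : R[i]) : R[i] :=
  (t ^+ q - ((1 - alpha)%:C)%C) ^+ d
  - ((alpha%:C)%C) ^+ d * t ^ ((q * d)%:Z - s%:Z).

Definition phi_root (R : rcfType) (q s d : nat) (alpha : R) (t : R[i]) : Prop :=
  (t != 0 \/ (s <= q * d)%N) /\ phi q s d alpha t = 0.

(* Main.v *)
Require Import Defs.
From HB Require Import structures.
From mathcomp Require Import all_boot all_order all_algebra.
From mathcomp Require Import reals.
From mathcomp Require Import complex.
From mathcomp Require Import zify ring.
Import Order.TTheory GRing.Theory Num.Theory.
Local Open Scope ring_scope.

Lemma rat_lt_frac (a b c d : nat) : (0 < b)%N -> (0 < d)%N ->
  ((a%:R / b%:R : rat) < c%:R / d%:R) = (a * d < c * b)%N.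
Proof.
move=> b0 d0.
rewrite ltr_pdivrMr ?ltr0n // mulrAC ltr_pdivlMr ?ltr0n //.
by rewrite -!natrM ltr_nat.
Qed.

Lemma farey_det n p q r s : farey_pair n p q r s -> (2 <= q)%N ->
  (r * q = p * s + 1)%N.
Proof.
move=> [[pq [qn cpq]] [rs [sn crs]] lt nob] q2.
have s0 : (0 < s)%N by lia.
rewrite rat_lt_frac // in lt; try lia.
have [u [v Huv]] := Bezoutz (p%:Z) (q%:Z).
have g1 : gcdz p%:Z q%:Z = 1 by rewrite /gcdz /= (eqP cpq).
rewrite g1 in Huv.
set k := (((n%:Z) + u) %/ q%:Z)%Z.
set c := (((n%:Z) + u) %% q%:Z)%Z.
have Hdiv : (n%:Z) + u = k * q%:Z + c by rewrite /k /c -divz_eq.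
have c0 : 0 <= c by rewrite /c modz_ge0 // -lt0n; lia.
have cq : c < q%:Z by rewrite /c ltz_pmod // ltz_nat; lia.
set y := k * q%:Z - u.
set x := k * p%:Z + v.
have Hxy : x * q%:Z = y * p%:Z + 1 by rewrite /x /y -Huv; ring.
have yn : y <= n%:Z by rewrite /y; lia.
have ny : n%:Z < y + q%:Z by rewrite /y; lia.
have y1 : 0 < y by lia.
have x1 : 0 < x by nia.
pose X := `|x|%N. pose Y := `|y|%N.
have eX : x = X%:Z by rewrite /X gtz0_abs.
have eY : y = Y%:Z by rewrite /Y gtz0_abs.
rewrite eX eY in Hxy yn ny y1 x1.
have HXY : (X * q = Y * p + 1)%N by lia.
have Yn : (Y <= n)%N by lia.
have nY : (n < Y + q)%N by lia.
have Y0 : (0 < Y)%N by lia.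
case: (ltngtP (r * Y) (X * s)) => h.
- exfalso. nia.
- exfalso.
  have fe : farey_elem n (X%:R / Y%:R).
    exists X, Y; split => //.
    + nia.
    + rewrite /coprime; apply/eqP; apply/eqP; rewrite -dvdn1.
      have g1' : (gcdn X Y %| Y * p + 1)%N by rewrite -HXY dvdn_mulr // dvdn_gcdl.
      by rewrite (dvdn_addr _ (dvdn_mulr _ (dvdn_gcdr _ _))) in g1'.
  apply: (nob _ fe).
  rewrite !rat_lt_frac //; try lia.
- set A := (r * q - p * s)%N.
  have hs : s = (Y * A)%N by rewrite /A; nia.
  have hr : r = (X * A)%N.
    apply/eqP; rewrite -(eqn_pmul2l Y0); apply/eqP.
    rewrite mulnC h hs; ring.
  have : (A %| gcdn r s)%N by rewrite dvdn_gcd hr hs !dvdn_mull.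
  rewrite (eqP crs) dvdn1 => /eqP A1.
  rewrite /A in A1; lia.
Qed.
Lemma realC_neq0 (R : rcfType) (b : R) : b != 0 -> (b%:C)%C != 0 :> R[i].
Proof. move=> b0; apply/eqP => -[] hb; by rewrite hb eqxx in b0. Qed.

Lemma expz_split (R : rcfType) (t : R[i]) (a b : nat) : t != 0 ->
  t ^ ((a%:Z) - (b%:Z)) = t ^+ a * (t ^+ b)^-1.
Proof. by move=> t0; rewrite expfzDr // -exprnN. Qed.

Lemma conj_phi (R : rcfType) q s d (alpha : R) (t : R[i]) : t != 0 ->
  phi q s d alpha (t^*)%C = ((phi q s d alpha t)^*)%C.
Proof.
move=> t0; rewrite /phi !expz_split ?conjc_eq0 //.
rewrite !(rmorphB, rmorphM, rmorphXn, conjc_real, conjc_inv, rmorph1) /=. by rewrite oppr0 conjc_inv rmorphXn.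
Qed.

Lemma circ (R : rcfType) (z1 z2 : R[i]) (b : R) : b != 0 -> `|z1| = `|z2| ->
  `|z1 - (b%:C)%C| = `|z2 - (b%:C)%C| -> z2 = z1 \/ z2 = (z1^*)%C.
Proof.
move=> b0 h1 h2.
have e1 : z1 * (z1^*)%C = z2 * (z2^*)%C by rewrite -!sqr_normc h1.
have e2 : (z1 - (b%:C)%C) * ((z1 - (b%:C)%C)^*)%C = (z2 - (b%:C)%C) * ((z2 - (b%:C)%C)^*)%C
  by rewrite -!sqr_normc h2.
have cb : forall z : R[i], ((z - (b%:C)%C)^*)%C = (z^*)%C - (b%:C)%C.
  move=> z; rewrite rmorphB; congr (_ - _); exact: conjc_real.
rewrite !cb in e2.
have e3 : z1 + (z1^*)%C = z2 + (z2^*)%C.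
  have h : (b%:C)%C * ((z1 + (z1^*)%C) - (z2 + (z2^*)%C)) = 0.
  have -> : (b%:C)%C * ((z1 + (z1^*)%C) - (z2 + (z2^*)%C)) =
     (z1 * (z1^*)%C - z2 * (z2^*)%C) - ((z1 - (b%:C)%C) * ((z1^*)%C - (b%:C)%C)
       - (z2 - (b%:C)%C) * ((z2^*)%C - (b%:C)%C)) by ring.
  by rewrite e1 e2 !subrr.
  by move/eqP: h; rewrite mulf_eq0 (negbTE (@realC_neq0 _ _ b0)) /= subr_eq0 => /eqP.
have : (z2 - z1) * (z2 - (z1^*)%C) = 0.
  have -> : (z2 - z1) * (z2 - (z1^*)%C) = z2 * z2 - (z1 + (z1^*)%C) * z2 + z1 * (z1^*)%C by ring.
  rewrite e3 e1; ring.
by move/eqP; rewrite mulf_eq0 !subr_eq0 => /orP[] /eqP; [left|right].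
Qed.

Lemma same_pow (R : rcfType) (p q r s d : nat) (alpha : R) (t1 t2 : R[i]) :
  (r * q = p * s + 1)%N -> alpha != 0 -> t1 != 0 -> t2 != 0 ->
  phi q s d alpha t1 = 0 -> phi q s d alpha t2 = 0 -> t2 ^+ q = t1 ^+ q -> t2 = t1.
Proof.
move=> hdet a0 t10 t20.
rewrite /phi !expz_split // !exprM => /eqP; rewrite subr_eq0 => /eqP h1.
move=> /eqP; rewrite subr_eq0 => /eqP h2 e.
rewrite e h1 in h2.
have aC : ((alpha%:C)%C ^+ d) != 0 :> R[i] by rewrite expf_neq0 // realC_neq0.
have X0 : (t1 ^+ q) ^+ d != 0 by rewrite !expf_neq0.
have hs : t2 ^+ s = t1 ^+ s.
  by apply/invr_inj; apply: (mulfI X0); apply: (mulfI aC); rewrite h2.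
have : t2 ^+ (r * q) = t1 ^+ (r * q) by rewrite mulnC !exprM e.
rewrite hdet !exprD !expr1 mulnC !exprM hs => h.
apply: (mulfI _ h); by rewrite !expf_neq0.
Qed.
Arguments farey_det {n p q r s}.
Arguments circ {R z1 z2 b}.
Arguments same_pow {R p q r s d alpha t1 t2}.
Arguments conj_phi {R q s d alpha t}.

Theorem theorem5p2 (R : realType) (n p q r s : nat) (alpha : R) (t1 t2 : R[i]) :
  farey_pair n p q r s -> (q < s)%N -> (2 <= q)%N ->
  0 < alpha < 1 ->
  phi_root q s (n %/ q) alpha t1 -> phi_root q s (n %/ q) alpha t2 ->
  `|t1| = `|t2| ->
  t2 = t1 \/ t2 = (t1^*)%C.
Proof.
move=> hf qs q2 /andP[a0 a1] [_ r1] [_ r2] hn.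
have hdet := farey_det hf q2.
have qn : (q <= n)%N by case: hf => [[_ [qn _]] _ _ _].
have d0 : (0 < n %/ q)%N by rewrite div.divn_gt0; lia.
move: r1 r2 d0; set d := (n %/ q)%N => r1 r2 d0.
have a0' : alpha != 0 by rewrite gt_eqF.
have b0 : 1 - alpha != 0 by rewrite subr_eq0 eq_sym (lt_eqF a1).
case: (eqVneq t1 0) => [t10|t10].
  left; move: hn; rewrite t10 normr0 => /eqP; rewrite eq_sym normr_eq0 => /eqP //.
have t20 : t2 != 0 by rewrite -normr_eq0 -hn normr_eq0.
have h1 := r1; have h2 := r2.
move: h1 h2; rewrite /phi !expz_split // => /eqP; rewrite subr_eq0 => /eqP h1.
move=> /eqP; rewrite subr_eq0 => /eqP h2.
have key : `|t1 ^+ q - ((1 - alpha)%:C)%C| = `|t2 ^+ q - ((1 - alpha)%:C)%C|.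
  apply/eqP; rewrite -(eqrXn2 d0) ?normr_ge0 // -!normrX h1 h2.
  by rewrite !normrM !normfV !normrX hn.
have hz : `|t1 ^+ q| = `|t2 ^+ q| by rewrite !normrX hn.
case: (circ b0 hz key) => e.
  by left; exact: (same_pow hdet a0' t10 t20 r1 r2 e).
right; apply: (same_pow hdet a0' _ t20 _ r2).
- by rewrite conjc_eq0.
- by rewrite conj_phi // r1 conjc0.
- by rewrite e rmorphXn.
Qed.
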